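(* Let $Q$ be a finite quiver. Every unital semisimple subalgebra of the path algebra $\Bbbk Q$ is isomorphic to $\Bbbk^n$ for some $n$.
   Context: $\Bbbk$ is an algebraically closed field of characteristic zero. $\Bbbk Q$ has as basis all paths in $Q$ of length $\ge0$, with multiplication by concatenation (zero if not composable); its unit is the sum of the vertex idempotents. A unital subalgebra contains the unit $1$ of $\Bbbk Q$. *)

(* Defs.v *)
From HB Require Import structures.
From mathcomp Require Import all_boot all_order all_algebra.
Set Implicit Arguments. Unset Strict Implicit. Unset Printing Implicit Defensive.
Import GRing.Theory.
Local Open Scope ring_scope.

Record quiver := Quiver {
  nV : nat; nA : nat;
  qsrc : 'I_nA -> 'I_nV;
  qtgt : 'I_nA -> 'I_nV }.

Section PathAlgebra.
Variable k : fieldType.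
Variable Q : quiver.

Definition vert := 'I_(nV Q).
Definition arr := 'I_(nA Q).

(* A (candidate) path: a starting vertex and a list of arrows, traversed
   left to right.  Length-0 paths (v, [::]) are the trivial paths e_v. *)
Definition qpath := (vert * seq arr)%type.

Fixpoint valid_from (v : vert) (s : seq arr) : bool :=
  match s with
  | [::] => true
  | a :: s' => (qsrc a == v) && valid_from (qtgt a) s'
  end.

Definition valid_path (p : qpath) : bool := valid_from p.1 p.2.

Definition endpt (v : vert) (s : seq arr) : vert := foldl (fun _ a => qtgt a) v s.

(* Elements of k Q: k-valued functions on paths with finite support
   consisting of (valid) paths. *)
Definition pelt := qpath -> k.

Definition in_kQ (f : pelt) : Prop :=
  exists l : seq qpath, forall p, f p != 0 -> (p \in l) && valid_path p.

Definition pzero : pelt := fun _ => 0.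
Definition padd (f g : pelt) : pelt := fun p => f p + g p.
Definition pscale (c : k) (f : pelt) : pelt := fun p => c * f p.
(* multiplication extending concatenation of paths bilinearly:
   (f g)(p) = sum over factorizations p = p1 p2 of f(p1) g(p2) *)
Definition pmul (f g : pelt) : pelt := fun p =>
  \sum_(i < (size p.2).+1)
     f (p.1, take i p.2) * g (endpt p.1 (take i p.2), drop i p.2).
(* unit = sum of all trivial paths e_v *)
Definition pone : pelt := fun p => if p.2 is [::] then 1 else 0.

Definition unital_subalgebra (S : pelt -> Prop) : Prop :=
  [/\ (forall f, S f -> in_kQ f),
      S pzero /\ S pone,
      (forall f g, S f -> S g -> S (padd f g)),
      (forall c f, S f -> S (pscale c f))
    & (forall f g, S f -> S g -> S (pmul f g))].

Definition left_ideal (S L : pelt -> Prop) : Prop :=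
  [/\ (forall f, L f -> S f),
      L pzero,
      (forall f g, L f -> L g -> L (padd f g)),
      (forall c f, L f -> L (pscale c f))
    & (forall a f, S a -> L f -> L (pmul a f))].

(* S is semisimple: the left regular module S is semisimple, i.e. every
   submodule (left ideal) is a direct summand. *)
Definition semisimple (S : pelt -> Prop) : Prop :=
  forall L, left_ideal S L ->
  exists L', [/\ left_ideal S L',
                 (forall f, L f -> L' f -> f = pzero)
               & (forall f, S f -> exists g h, [/\ L g, L' h & f = padd g h])].

Definition iso_kn (S : pelt -> Prop) (n : nat) : Prop :=
  exists psi : {ffun 'I_n -> k} -> pelt,
  [/\ injective psi,
      (forall x, S (psi x)) /\ (forall f, S f -> exists x, psi x = f),
      (forall x y : {ffun 'I_n -> k}, psi [ffun i => x i + y i] = padd (psi x) (psi y)) /\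
      (forall c (x : {ffun 'I_n -> k}), psi [ffun i => c * x i] = pscale c (psi x)),
      (forall x y : {ffun 'I_n -> k}, psi [ffun i => x i * y i] = pmul (psi x) (psi y))
    & psi [ffun => 1] = pone].

End PathAlgebra.

(* Main.v *)
Require Import Defs.
From mathcomp Require Import all_boot all_order all_algebra.
From Stdlib Require Import ClassicalDescription ClassicalEpsilon Classical FunctionalExtensionality.
Set Implicit Arguments. Unset Strict Implicit. Unset Printing Implicit Defensive.
Import GRing.Theory.
Local Open Scope ring_scope.

Definition ev (k : fieldType) (Q : quiver) (f : pelt k Q) (v : vert Q) : k := f (v, [::]).

Lemma ev_mul (k : fieldType) (Q : quiver) (f g : pelt k Q) v :
  ev (pmul f g) v = ev f v * ev g v.
Proof. by rewrite /ev /pmul big_ord1. Qed.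

Lemma ev_add (k : fieldType) (Q : quiver) (f g : pelt k Q) v :
  ev (padd f g) v = ev f v + ev g v.
Proof. by []. Qed.

Lemma ev_scale (k : fieldType) (Q : quiver) c (f : pelt k Q) v :
  ev (pscale c f) v = c * ev f v.
Proof. by []. Qed.

Lemma ev_one (k : fieldType) (Q : quiver) v : ev (@pone k Q) v = 1.
Proof. by []. Qed.

Lemma pmul1 (k : fieldType) (Q : quiver) (f : pelt k Q) : pmul f (@pone k Q) = f.
Proof.
apply: functional_extensionality => [[v s]].
rewrite /pmul /= big_ord_recr /= take_size drop_size /= mulr1 big1 ?add0r //.
move=> i _; rewrite /pone.
have : (drop i s) != [::].
  by rewrite -size_eq0 size_drop subn_eq0 -ltnNge ltn_ord.
by case: (drop i s) => [|a t] //= _; rewrite mulr0.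
Qed.

Lemma pmulDr (k : fieldType) (Q : quiver) (f g h : pelt k Q) :
  pmul f (padd g h) = padd (pmul f g) (pmul f h).
Proof.
apply: functional_extensionality => p.
by rewrite /pmul /padd -big_split /=; apply: eq_bigr => i _; rewrite mulrDr.
Qed.

Lemma idem_zero (k : fieldType) (Q : quiver) (f : pelt k Q) :
  (forall p, f p = pmul f f p) -> (forall v, ev f v = 0) -> f = @pzero k Q.
Proof.
move=> Hi H0; apply: functional_extensionality => p.
rewrite /pzero.
move: {2}(size p.2) (leqnn (size p.2)) => n; elim: n p => [|n IH] [v s] /=.
  by rewrite leqn0 size_eq0 => /eqP ->; apply: H0.
case: s => [|a s] Hs; first exact: H0.
rewrite Hi /pmul /= big_ord_recl /= big1 ?addr0.
  by have := H0 v; rewrite /ev => ->; rewrite mul0r.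
move=> i _; rewrite [X in _ * X]IH ?mulr0 //= size_drop.
by move: Hs => /=; rewrite ltnS => Hs; apply: leq_trans (leq_subr _ _) Hs.
Qed.

Lemma trivial_part_inj (k : fieldType) (Q : quiver) (S : pelt k Q -> Prop) :
  unital_subalgebra S -> semisimple S ->
  forall f, S f -> (forall v, ev f v = 0) -> f = @pzero k Q.
Proof.
move=> [Hin [S0 S1] SD SZ SM] Hss.
pose L := fun f => S f /\ forall v, ev f v = 0.
have HL : left_ideal S L.
  split.
  - by move=> f [].
  - by split.
  - by move=> f g [Sf Hf] [Sg Hg]; split; [exact: SD | move=> v; rewrite ev_add Hf Hg addr0].
  - by move=> c f [Sf Hf]; split; [exact: SZ | move=> v; rewrite ev_scale Hf mulr0].
  - by move=> a f Sa [Sf Hf]; split; [exact: SM | move=> v; rewrite ev_mul Hf mulr0].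
have [L' [[L'S L'0 L'D L'Z L'M] Hcap Hsum]] := Hss L HL.
have [g [h [[Sg Lg] L'h E1]]] := Hsum _ S1.
have Egg : forall p, g p = pmul g g p.
  have Lt : L (padd g (pscale (-1) (pmul g g))).
    split; first by apply: (SD) => //; apply: (SZ); apply: (SM).
    by move=> v; rewrite ev_add ev_scale ev_mul Lg mul0r mulr0 addr0.
  have L't : L' (pmul g h) by apply: L'M.
  have Et : pmul g h = padd g (pscale (-1) (pmul g g)).
    have := pmul1 g; rewrite E1 pmulDr => E.
    apply: functional_extensionality => p.
    rewrite /padd /pscale -{2}E /padd mulN1r.
    by rewrite addrC addKr.
  have := Hcap _ Lt; rewrite -Et => /(_ L't) Ez p.
  have := congr1 (fun F => F p) Ez; rewrite Et /padd /pscale /pzero mulN1r.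
  by move/eqP; rewrite subr_eq0 => /eqP.
have g0 : g = @pzero k Q by apply: idem_zero.
have h1 : h = @pone k Q.
  by rewrite E1 g0; apply: functional_extensionality => p; rewrite /padd /pzero add0r.
move=> f Sf Hf; apply: Hcap; first by split.
by rewrite -(pmul1 f) -h1; apply: L'M.
Qed.

Definition eqv (k : fieldType) (Q : quiver) (S : pelt k Q -> Prop) (u v : vert Q) : Prop :=
  forall f, S f -> ev f u = ev f v.
Definition eqb (k : fieldType) (Q : quiver) (S : pelt k Q -> Prop) (u v : vert Q) : bool :=
  if excluded_middle_informative (eqv S u v) then true else false.
Lemma eqbP (k : fieldType) (Q : quiver) (S : pelt k Q -> Prop) u v :
  reflect (eqv S u v) (eqb S u v).
Proof. by rewrite /eqb; case: excluded_middle_informative => H; constructor. Qed.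

Definition cls (k : fieldType) (Q : quiver) (S : pelt k Q -> Prop) (v : vert Q) : {set vert Q} :=
  [set u | eqb S u v].
Definition Rcls (k : fieldType) (Q : quiver) (S : pelt k Q -> Prop) : {set {set vert Q}} :=
  [set cls S v | v : vert Q].
Lemma clsR (k : fieldType) (Q : quiver) (S : pelt k Q -> Prop) v : cls S v \in Rcls S.
Proof. by apply: imset_f. Qed.
Definition idx (k : fieldType) (Q : quiver) (S : pelt k Q -> Prop) v : 'I_#|Rcls S| :=
  enum_rank_in (clsR S v) (cls S v).

Lemma cls_eq (k : fieldType) (Q : quiver) (S : pelt k Q -> Prop) u v :
  cls S u = cls S v <-> eqv S u v.
Proof.
split.
  move=> E; have : u \in cls S v by rewrite -E inE; apply/eqbP => f.
  by rewrite inE => /eqbP.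
move=> H; apply/setP => w; rewrite !inE.
apply/eqbP/eqbP => H' f Sf; rewrite (H' f Sf) //.
  by rewrite (H f Sf).
by rewrite -(H f Sf).
Qed.

Lemma idx_eq (k : fieldType) (Q : quiver) (S : pelt k Q -> Prop) u v :
  idx S u = idx S v <-> eqv S u v.
Proof.
split.
  move=> E; apply/cls_eq.
  have := congr1 enum_val E; rewrite /idx !enum_rankK_in //; exact: clsR.
move/cls_eq => E; rewrite /idx (eq_enum_rank_in (clsR S u) (clsR S v)) ?E //.
exact: clsR.
Qed.

Lemma idx_surj (k : fieldType) (Q : quiver) (S : pelt k Q -> Prop) i :
  exists r, idx S r = i.
Proof.
have : enum_val i \in Rcls S by apply: enum_valP.
case/imsetP => r _ E; exists r; apply: enum_val_inj.
by rewrite /idx enum_rankK_in ?E //; exact: clsR.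
Qed.

Lemma sep_elt (k : fieldType) (Q : quiver) (S : pelt k Q -> Prop) :
  unital_subalgebra S -> forall u r,
  exists b, [/\ S b, ev b r = 1 & (~ eqv S u r -> ev b u = 0)].
Proof.
move=> [Hin [S0 S1] SD SZ SM] u r.
case: (classic (eqv S u r)) => H.
  by exists (@pone k Q); split.
have [a Ha] := not_all_ex_not _ _ H.
have [Sa Na] : S a /\ ev a u <> ev a r.
  by split; [apply: NNPP => C; apply: Ha => /C | move=> E; apply: Ha].
pose c := (ev a r - ev a u)^-1.
exists (pscale c (padd a (pscale (- ev a u) (@pone k Q)))); split.
- by apply: (SZ); apply: (SD) => //; apply: (SZ).
- rewrite ev_scale ev_add ev_scale ev_one mulr1 /c mulVf //.
  by rewrite subr_eq0; apply/eqP => E; apply: Na.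
- by move=> _; rewrite ev_scale ev_add ev_scale ev_one mulr1 subrr mulr0.
Qed.

Lemma indicator (k : fieldType) (Q : quiver) (S : pelt k Q -> Prop) :
  unital_subalgebra S -> forall r,
  exists E, S E /\ forall v, ev E v = if eqb S v r then 1 else 0.
Proof.
move=> HS r.
have : forall s : seq (vert Q), exists E, [/\ S E,
    forall v, eqv S v r -> ev E v = 1 & forall v, v \in s -> ~ eqv S v r -> ev E v = 0].
  case: (HS) => [Hin [S0 S1] SD SZ SM].
  elim => [|u s [E [SE E1 E0]]].
    by exists (@pone k Q); split.
  have [b [Sb b1 b0]] := sep_elt HS u r.
  exists (pmul b E); split.
  - exact: SM.
  - by move=> v H; rewrite ev_mul E1 // (H b Sb) b1 mulr1.
  - move=> v; rewrite inE => /orP [/eqP -> | vs] H.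
      by rewrite ev_mul b0 // mul0r.
    by rewrite ev_mul E0 // mulr0.
case/(_ (enum (vert Q))) => E [SE E1 E0]; exists E; split => // v.
case: eqbP => H; first exact: E1.
by apply: E0 => //; rewrite mem_enum.
Qed.

Lemma uniq_ev (k : fieldType) (Q : quiver) (S : pelt k Q -> Prop) :
  unital_subalgebra S -> semisimple S ->
  forall f g, S f -> S g -> (forall v, ev f v = ev g v) -> f = g.
Proof.
move=> HS Hss f g Sf Sg H.
have HS' := HS; case: HS' => [Hin [S0 S1] SD SZ SM].
have E : padd f (pscale (-1) g) = @pzero k Q.
  apply: (trivial_part_inj HS Hss).
  - by apply: (SD) => //; apply: (SZ).
  - by move=> v; rewrite ev_add ev_scale H mulN1r subrr.
apply: functional_extensionality => p.
have := congr1 (fun F => F p) E; rewrite /padd /pscale /pzero mulN1r.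
by move/eqP; rewrite subr_eq0 => /eqP.
Qed.

Lemma psi_ex (k : fieldType) (Q : quiver) (S : pelt k Q -> Prop) :
  unital_subalgebra S -> forall x : {ffun 'I_#|Rcls S| -> k},
  exists f, S f /\ forall v, ev f v = x (idx S v).
Proof.
move=> HS x; have HS' := HS; case: HS' => [Hin [S0 S1] SD SZ SM].
have : forall s : seq 'I_#|Rcls S|, exists f, S f /\
   forall v, ev f v = if idx S v \in s then x (idx S v) else 0.
  elim => [|i s [f [Sf Hf]]]; first by exists (@pzero k Q); split.
  case: (boolP (i \in s)) => is_.
    exists f; split => // v; rewrite Hf inE.
    by case: eqP => // ->; rewrite is_ orbT.
  have [r Er] := idx_surj i.
  have [E [SE HE]] := indicator HS r.
  exists (padd f (pscale (x i) E)); split.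
    by apply: (SD) => //; apply: (SZ).
  move=> v; rewrite ev_add ev_scale HE Hf inE.
  case: eqbP => H.
    have Ei : idx S v = i by rewrite -Er; apply/idx_eq.
    by rewrite Ei eqxx (negbTE is_) mulr1 add0r.
  have Ni : (idx S v == i) = false.
    by apply/negbTE/eqP => Ei; apply: H; apply/idx_eq; rewrite Ei Er.
  by rewrite Ni mulr0 addr0.
case/(_ (enum 'I_#|Rcls S|)) => f [Sf Hf]; exists f; split => // v.
by rewrite Hf mem_enum.
Qed.

Theorem mainTheorem13 (k : closedFieldType) (hk : [pchar k]%R =i pred0)
  (Q : quiver) (S : pelt k Q -> Prop) :
  unital_subalgebra S -> semisimple S -> exists n : nat, iso_kn S n.
Proof.
move=> HS Hss; exists #|Rcls S|.
have HS' := HS; case: HS' => [Hin [S0 S1] SD SZ SM].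
pose psi x := proj1_sig (constructive_indefinite_description _ (psi_ex HS x)).
have Spsi x : S (psi x) by rewrite /psi; case: constructive_indefinite_description => ? [].
have Epsi x v : ev (psi x) v = x (idx S v).
  by rewrite /psi; case: constructive_indefinite_description => ? [].
have U := uniq_ev HS Hss.
exists psi; split.
- move=> x y Exy; apply/ffunP => i; have [r <-] := idx_surj i.
  by rewrite -!Epsi Exy.
- split => // f Sf.
  exists [ffun i => if [pick r | idx S r == i] is Some r then ev f r else 0].
  apply: U => // v; rewrite Epsi ffunE.
  case: pickP => [r /eqP /idx_eq H | H]; first by rewrite (H f Sf).
  by have := H v; rewrite eqxx.
- split.
    move=> x y; apply: U => //; first by apply: (SD).
    by move=> v; rewrite ev_add !Epsi ffunE.
  move=> c x; apply: U => //; first by apply: (SZ).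
  by move=> v; rewrite ev_scale !Epsi ffunE.
- move=> x y; apply: U => //; first by apply: (SM).
  by move=> v; rewrite ev_mul !Epsi ffunE.
- apply: U => // v; by rewrite Epsi ffunE ev_one.
Qed.
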